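(* For integers $m\ge1$ and $k\ge1$, $$\sum_{i=0}^{k}\mu(P|_m,i,J^{*})\binom{m-2i}{2k-2i}\equiv\mu(P|_m,k,L)\pmod 2.$$
   Context: Let $N=\{0,1,2,\ldots\}$, $J^{*}=\{(2n+1)2^{2k}-1 : n,k\in N,\ k>0\}$, $L=N\setminus J^{*}$, and $P=\{k\in N: k\equiv0,3\pmod 4\}$. For an infinite set $A\subseteq N$, $A|_m$ denotes the set of the $m$ smallest elements of $A$. An involution on a finite set $A$ is a permutation $\sigma$ of $A$ with $\sigma=\sigma^{-1}$; its cycles are fixed points and transpositions $(c,d)$. A transposition $(c,d)$ is said to be in a set $B$ if $c+d\in B$. For a finite set $A\subseteq N$, an integer $k\ge0$ and a set $B\subseteq N$, $\mu(A,k,B)$ denotes the number of involutions of $A$ having exactly $k$ transpositions, all of which are in $B$. Binomial coefficients $\binom{a}{b}$ with $b>a$ or $b<0$ are $0$. *)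

(* Defs.v *)
From mathcomp Require Import all_boot all_fingroup.
Set Implicit Arguments. Unset Strict Implicit. Unset Printing Implicit Defensive.

(* J^* = {(2n+1) 2^(2k) - 1 : n, k in N, k > 0}.  If x is in J^*, then
   n <= x and k <= x, so the bounded existentials are exact. *)
Definition Jstar (x : nat) : bool :=
  [exists n : 'I_x.+2, exists k : 'I_x.+2,
     (0 < k) && (x.+1 == (2 * n + 1) * 2 ^ (2 * k))].

Definition Lset (x : nat) : bool := ~~ Jstar x.

Definition Pset (x : nat) : bool := (x %% 4 == 0) || (x %% 4 == 3).

(* The m smallest elements of A among {0,...,N-1} (equal to A|_m as soon as
   A has at least m elements below N). *)
Definition restr (A : pred nat) (N m : nat) : seq nat :=
  take m [seq x <- iota 0 N | A x].

(* P|_m : the m smallest elements of P; they are all < 4m (indeed < 2m+2). *)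
Definition Prestr (m : nat) : seq nat := restr Pset (4 * m) m.

(* mu(A,k,B): number of involutions sigma of the finite set A (a duplicate-free
   seq, viewed as the finite type of its elements) having exactly k
   transpositions (each transposition (c,d) is counted once, via c < d),
   all of which are in B (i.e. c + d \in B). *)
Definition mu (A : seq nat) (k : nat) (B : pred nat) : nat :=
  #|[set s : {perm seq_sub A} |
      [&& (s * s == 1)%g,
          #|[set x : seq_sub A | val x < val (s x)]| == k &
          [forall x : seq_sub A, (s x != x) ==> B (val x + val (s x))]]]|.

(* binomial with the paper's convention: C(a,b) = 0 when b > a or b < 0,
   here for a = m - 2i (possibly negative as an integer). *)
Definition binomZ (m i b : nat) : nat := if 2 * i <= m then 'C(m - 2 * i, b) else 0.

(* Main.v *)
Require Import Defs.
From mathcomp Require Import all_boot all_fingroup all_algebra.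
From mathcomp Require Import zify.
Set Implicit Arguments. Unset Strict Implicit. Unset Printing Implicit Defensive.

Section Inv.
Variables (T : finType) (v : T -> nat).
Hypothesis v_inj : injective v.

Definition invol (s : {perm T}) := [forall x, s (s x) == x].
Definition supp (D : {set T}) (s : {perm T}) := [forall x, (x \notin D) ==> (s x == x)].
Definition ntr (s : {perm T}) := #|[set x | v x < v (s x)]|.
Definition okR (R : T -> T -> bool) (s : {perm T}) := [forall x, (s x != x) ==> R x (s x)].
Definition invs D k R := [set s : {perm T} | [&& invol s, supp D s, ntr s == k & okR R s]].
Definition X D k R := #|invs D k R|.

Lemma involP s : invol s -> forall x, s (s x) = x.
Proof. by move/forallP=> H x; apply/eqP. Qed.

Lemma moved s : invol s -> #|[set x | s x != x]| = 2 * ntr s.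
Proof.
move=> /involP Hs; rewrite /ntr; set U := [set x | v x < v (s x)].
have -> : [set x | s x != x] = U :|: [set s x | x in U].
  apply/setP=> x; rewrite /U !inE; apply/idP/idP.
  - move=> Hx; have Hv : v x != v (s x) by by apply: contraNneq Hx => /v_inj <-.
    case: (ltnP (v x) (v (s x))) => H; first by [].
    have H' : v (s x) < v x by rewrite ltn_neqAle eq_sym Hv H.
    apply/imsetP; exists (s x); last by rewrite Hs.
    by rewrite inE Hs.
  - case/orP=> [|/imsetP[y]]; first by apply: contraTneq => ->; rewrite ltnn.
    rewrite inE => Hy ->; rewrite Hs; apply: contraTneq Hy => <-.
    by rewrite ltnn.
rewrite cardsU card_imset; last exact: perm_inj.
have -> : U :&: [set s x | x in U] = set0.
  apply/setP=> x; rewrite !inE; apply/negbTE/andP=> [[H1 /imsetP[y]]].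
  rewrite inE => H2 Ex; move: H1; rewrite Ex Hs => H1.
  by have := ltn_trans H1 H2; rewrite ltnn.
by rewrite cards0 subn0 addnn mul2n.
Qed.

Lemma X0 (D : {set T}) R : X D 0 R = 1.
Proof.
rewrite /X (_ : invs D 0 R = [set 1%g]) ?cards1 //.
apply/setP => s; rewrite !inE; apply/idP/eqP.
- case/and4P => Hi _ Hn _; have := moved Hi; rewrite (eqP Hn) muln0.
  move/eqP; rewrite cards_eq0 => /eqP H0.
  apply/permP => x; rewrite perm1; apply/eqP; apply/negPn/negP => Hx.
  have : x \in [set x | s x != x] by rewrite inE.
  by rewrite H0 inE.
- move=> ->; apply/and4P; split.
  + by apply/forallP => x; rewrite !perm1.
  + by apply/forallP => x; rewrite perm1 eqxx implybT.
  + rewrite /ntr; apply/eqP; apply/eqP; rewrite cards_eq0; apply/eqP/setP => x.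
    by rewrite !inE perm1 ltnn.
  + by apply/forallP => x; rewrite perm1 eqxx.
Qed.

Lemma moved_sub (D : {set T}) s : supp D s -> [set x | s x != x] \subset D.
Proof.
move/forallP=> Hs; apply/subsetP => x; rewrite inE; apply: contraR => Hx.
exact: (implyP (Hs x)).
Qed.

Lemma Xbig (D : {set T}) k R : #|D| < 2 * k -> X D k R = 0.
Proof.
move=> H; apply/eqP; rewrite cards_eq0; apply/eqP/setP => s; rewrite !inE.
apply/negbTE/and4P => [[Hi Hs Hn _]].
have := moved Hi; rewrite (eqP Hn) => E.
have := subset_leq_card (moved_sub Hs).
by rewrite E leqNgt H.
Qed.

Lemma suppD1 (D : {set T}) b s : supp (D :\ b) s = supp D s && (s b == b).
Proof.
apply/forallP/andP => [H|[/forallP H1 Hb] x].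
- split; last by apply: (implyP (H b)); rewrite !inE eqxx.
  apply/forallP => x; apply/implyP => Hx; apply: (implyP (H x)).
  by rewrite !inE negb_and Hx orbT.
- apply/implyP; rewrite !inE negb_and negbK; case/orP => [/eqP -> // | Hx].
  exact: (implyP (H1 x)).
Qed.

Lemma XD1 (D : {set T}) b k R : X (D :\ b) k R = \sum_(s in invs D k R) (s b == b).
Proof.
rewrite /X -sum1_card [LHS]big_mkcond [RHS]big_mkcond /=; apply: eq_bigr => s _.
rewrite !inE suppD1.
by case: (invol s); case: (supp D s); case: (s b == b); case: (ntr s == k); case: (okR R s).
Qed.

Lemma sumfix (E : {set T}) i R : \sum_(b in E) X (E :\ b) i R = (#|E| - 2 * i) * X E i R.
Proof.
under eq_bigr do rewrite XD1.
rewrite exchange_big /= /X mulnC -sum_nat_const.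

apply: eq_bigr => s; rewrite inE.
move=> /and4P[Hi Hs Hn _].
rewrite -(eqP Hn) -(moved Hi) -(cardsID [set x | s x != x] E).
rewrite (setIidPr (moved_sub Hs)) addKn -sum1_card [LHS]big_mkcond [RHS]big_mkcond /=.

apply: eq_bigr => b _; rewrite !inE negbK.
by case: (b \in E); case: (s b == b).
Qed.

Lemma involE s : invol s = (s * s == 1)%g.
Proof.
apply/forallP/eqP => [H|H x].
- by apply/permP => x; rewrite permM perm1; apply/eqP/H.
- by rewrite -permM H perm1.
Qed.

Section Transfer.
Variables (a b : T) (s : {perm T}).
Hypotheses (ab : a != b) (sa : s a = b) (sb : s b = a).
Let t := (tperm a b * s)%g.

Lemma ta : t a = a. Proof. by rewrite /t permM tpermL sb. Qed.
Lemma tb : t b = b. Proof. by rewrite /t permM tpermR sa. Qed.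
Lemma tx x : x != a -> x != b -> t x = s x.
Proof. by move=> xa xb; rewrite /t permM tpermD // eq_sym. Qed.

Lemma sx x : x != a -> x != b -> (s x != a) && (s x != b).
Proof.
move=> xa xb; apply/andP; split.
- by apply: contra xb => /eqP; rewrite -sb => /perm_inj ->.
- by apply: contra xa => /eqP; rewrite -sa => /perm_inj ->.
Qed.

Lemma comm_ts : (s * tperm a b = tperm a b * s)%g.
Proof.
apply/permP => x; rewrite !permM.
have [->|xa] := eqVneq x a; first by rewrite sa tpermL tpermR.
have [->|xb] := eqVneq x b; first by rewrite sb tpermL tpermR.
case/andP: (sx xa xb) => H1 H2.
by rewrite !tpermD // eq_sym.
Qed.

Lemma invol_t : invol t = invol s.
Proof.
rewrite !involE /t; congr (_ == _).
by rewrite -mulgA (mulgA s) comm_ts !mulgA tperm2 mul1g.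
Qed.

Lemma supp_t (D : {set T}) : a \in D -> b \in D -> supp (D :\ a :\ b) t = supp D s.
Proof.
move=> aD bD; rewrite !suppD1 ta tb !eqxx !andbT.
apply/forallP/forallP => H x; apply/implyP => Hx.
- have xa : x != a by apply: contraNneq Hx => ->.
  have xb : x != b by apply: contraNneq Hx => ->.
  by rewrite -tx //; apply: (implyP (H x)).
- have xa : x != a by apply: contraNneq Hx => ->.
  have xb : x != b by apply: contraNneq Hx => ->.
  by rewrite tx //; apply: (implyP (H x)).
Qed.

Lemma ntr_t : ntr s = (ntr t).+1.
Proof.
rewrite /ntr (cardsD1 a) (cardsD1 b ([set x | v x < v (s x)] :\ a)).
have -> : [set x | v x < v (s x)] :\ a :\ b = [set x | v x < v (t x)].
  apply/setP => x; rewrite !inE.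
  have [->|xb] := eqVneq x b; first by rewrite tb ltnn.
  have [->|xa] := eqVneq x a; first by rewrite ta ltnn.
  by rewrite tx.
rewrite !inE sa sb eq_sym ab /= addnA.
have vab : v a != v b by apply: contra ab => /eqP/v_inj ->.
by case: (ltngtP (v a) (v b)) vab.
Qed.

Lemma okR_t R : (forall x y, R x y = R y x) -> okR R s = R a b && okR R t.
Proof.
move=> Rs; apply/forallP/andP => [H|[Rab /forallP H] x].
- split; first by have := implyP (H a); rewrite sa eq_sym ab => /(_ isT).
  apply/forallP => x; apply/implyP.
  have [->|xa] := eqVneq x a; first by rewrite ta eqxx.
  have [->|xb] := eqVneq x b; first by rewrite tb eqxx.
  by rewrite tx // => Hx; apply: (implyP (H x)).
- apply/implyP.
  have [->|xa] := eqVneq x a; first by rewrite sa.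
  have [->|xb] := eqVneq x b; first by rewrite sb Rs.
  by rewrite -tx // => Hx; apply: (implyP (H x)).
Qed.
End Transfer.

Lemma sum_bool (A : {set {perm T}}) (P : pred {perm T}) :
  \sum_(s in A) (P s : nat) = #|[set s in A | P s]|.
Proof.
rewrite -sum1_card [LHS]big_mkcond [RHS]big_mkcond /=; apply: eq_bigr => s _.
by rewrite !inE; case: (s \in A); case: (P s).
Qed.

Lemma Nb (D : {set T}) a b k R : (forall x y, R x y = R y x) -> a \in D -> a != b ->
  \sum_(s in invs D k.+1 R) (s a == b) =
    if (b \in D) && R a b then X (D :\ a :\ b) k R else 0.
Proof.
move=> Rs aD ab; rewrite sum_bool.
case: ifP => [/andP[bD Rab] | Hb].
- rewrite /X -(card_imset _ (mulgI (tperm a b))).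
  apply: eq_card => s; apply/idP/imsetP.
  + rewrite !inE => /andP[/and4P[Hi Hsu Hn Ho] /eqP sa].
    have sb : s b = a by rewrite -sa (involP Hi).
    exists (tperm a b * s)%g; last by rewrite mulgA tperm2 mul1g.
    rewrite inE invol_t // supp_t // Hi Hsu /=.
    rewrite (ntr_t ab sa sb) eqSS in Hn; rewrite Hn /=.
    by rewrite (okR_t ab sa sb Rs) Rab in Ho.
  + case=> t Ht ->; move: Ht; rewrite /invs inE => /and4P[Hi Hsu Hn Ho].
    move: (Hsu); rewrite !suppD1 => /andP[/andP[_ /eqP ta] /eqP tb].
    have sa : (tperm a b * t)%g a = b by rewrite permM tpermL tb.
    have sb : (tperm a b * t)%g b = a by rewrite permM tpermR ta.
    have Ht : t = (tperm a b * (tperm a b * t))%g by rewrite mulgA tperm2 mul1g.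
    rewrite Ht in Hi Hsu Hn Ho.
    rewrite invol_t // in Hi; rewrite supp_t // in Hsu.
    rewrite !inE Hi Hsu (ntr_t ab sa sb) (eqP Hn) eqxx sa eqxx /=.
    by rewrite (okR_t ab sa sb Rs) Rab Ho.
- apply/eqP; rewrite cards_eq0; apply/eqP/setP => s; rewrite !inE.
  apply/negbTE/andP => [[/and4P[Hi Hsu Hn Ho] /eqP sa]].
  move/negbT: Hb; rewrite negb_and => /orP[bD | Rab].
  + have sb : s b = b by apply/eqP; apply: (implyP (forallP Hsu b)).
    by rewrite -{1}(involP Hi a) sa sb eqxx in ab.
  + have := implyP (forallP Ho a); rewrite sa eq_sym ab => /(_ isT).
    by rewrite (negbTE Rab).
Qed.

Lemma Xrec (D : {set T}) a k R : (forall x y, R x y = R y x) -> a \in D ->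
  X D k.+1 R = X (D :\ a) k.+1 R + \sum_(b in D :\ a | R a b) X (D :\ a :\ b) k R.
Proof.
move=> Rs aD.
have -> : X D k.+1 R = \sum_(s in invs D k.+1 R) \sum_b (s a == b).
  rewrite /X -sum1_card; apply: eq_bigr => s _.
  rewrite (bigD1 (s a)) //= eqxx big1 // => b; by rewrite eq_sym => /negbTE ->.
rewrite exchange_big /= (bigD1 a) //= -XD1; congr (_ + _).
rewrite [LHS]big_mkcond [RHS]big_mkcond /=; apply: eq_bigr => b _.
rewrite in_setD1; have [->|ba] := eqVneq b a; first by [].
by rewrite Nb // eq_sym.
Qed.
End Inv.

Import GRing.Theory.
Local Open Scope ring_scope.

Lemma oneone : (1 + 1 : 'F_2) = 0. Proof. by apply/val_inj. Qed.
Lemma natF2 n : (n%:R : 'F_2) = (odd n)%:R.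
Proof.
elim: n => // n IH; rewrite -nat1r IH /=.
by case: (odd n) => //=; rewrite ?oneone ?addr0.
Qed.
Lemma binF2 (r m : nat) :
  ('C(r.+1, (2 * m).+2)%:R : 'F_2) = 'C(r, (2 * m).+2)%:R + r%:R * 'C(r.-1, 2 * m)%:R.
Proof.
rewrite binS -natrM mul_bin_diag natrM [((2 * m).+1)%:R]natF2 /=.
by rewrite oddM /= mul1r natrD.
Qed.

Section Main.
Variables (T : finType) (v : T -> nat).
Hypothesis v_inj : injective v.
Variable R : T -> T -> bool.
Hypothesis Rs : forall x y, R x y = R y x.
Definition nR := fun x y => ~~ R x y.
Lemma nRs : forall x y, nR x y = nR y x.
Proof. by move=> x y; rewrite /nR Rs. Qed.

Definition cc n k i := 'C(n - 2 * i, 2 * (k - i)).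

Local Open Scope ring_scope.

Lemma K1 n k i (x : 'F_2) : (i <= k)%N -> ((n < 2 * i)%N -> x = 0) ->
  x * (cc n.+1 k.+1 i)%:R = x * (cc n k.+1 i)%:R + (n - 2 * i)%:R * x * (cc n.-1 k i)%:R.
Proof.
move=> ik Hx; have [big|sm] := ltnP n (2 * i).
  by rewrite (Hx big) !mulr0 !mul0r addr0.
rewrite /cc (subSn sm) (subSn ik) mulnS.
have -> : (n.-1 - 2 * i = (n - 2 * i).-1)%N by rewrite -!subn1 subnAC.
rewrite [in LHS]binF2 mulrDr; congr (_ + _).
by rewrite mulrA [_ * x]mulrC.
Qed.

Lemma cckk n k : cc n k k = 1%N.
Proof. by rewrite /cc subnn muln0 bin0. Qed.

Lemma cc_shift n k i : cc n.+1 k.+1 i.+1 = cc n.-1 k i.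
Proof.
rewrite /cc; congr 'C(_, _); lia.
Qed.

Lemma xx2 (x : 'F_2) : x + x = 0.
Proof. exact: (addrr_pchar2 (pchar_Fp (isT : prime 2))). Qed.

Theorem mainF2 : forall n (D : {set T}), #|D| = n -> forall k,
  ((X v D k nR)%:R : 'F_2) = \sum_(i < k.+1) (X v D i R)%:R * (cc #|D| k i)%:R.
Proof.
elim/ltn_ind => n IH D HD [|k].
  by rewrite (X0 v_inj) big_ord1 (X0 v_inj) /cc muln0 bin0 mulr1.
case: (set_0Vmem D) => [D0 | [a aD]].
  rewrite D0 (Xbig v_inj) ?cards0 // big1 // => i _.
  case: (posnP i) => [-> | ip].
    by rewrite /cc subn0 sub0n bin0n muln_eq0 /= mulr0.
  by rewrite (Xbig v_inj) ?cards0 ?mul0r // muln_gt0 ip.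
set D' := D :\ a.
have HD' : #|D| = #|D'|.+1 by rewrite (cardsD1 a D) aD.
set n' := #|D'|.
have ltD' : (n' < n)%N by rewrite -HD HD'.
have IH1 := IH n' ltD' D' erefl k.+1.
have IH2 : forall b, b \in D' -> ((X v (D' :\ b) k nR)%:R : 'F_2) =
    \sum_(i < k.+1) (X v (D' :\ b) i R)%:R * (cc n'.-1 k i)%:R.
  move=> b bD; have Hb : #|D' :\ b| = n'.-1 by rewrite /n' (cardsD1 b D') bD.
  rewrite (IH (n'.-1)) ?Hb //; lia.
set G := fun b => \sum_(i < k.+1) ((X v (D' :\ b) i R)%:R * (cc n'.-1 k i)%:R : 'F_2).
have E5 : \sum_(b in D') G b =
    \sum_(i < k.+1) (n' - 2 * i)%:R * (X v D' i R)%:R * (cc n'.-1 k i)%:R.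
  rewrite /G exchange_big /=; apply: eq_bigr => i _.
  by rewrite -mulr_suml -natr_sum (sumfix v_inj) natrM.
have ERHS : \sum_(i < k.+2) ((X v D i R)%:R * (cc n'.+1 k.+1 i)%:R : 'F_2) =
    \sum_(i < k.+2) (X v D' i R)%:R * (cc n'.+1 k.+1 i)%:R + \sum_(b in D' | R a b) G b.
  rewrite [LHS]big_ord_recl [X in _ = X + _]big_ord_recl !(X0 v_inj) -addrA; congr (_ + _).
  under eq_bigr => i _ do rewrite lift0 (Xrec v_inj _ Rs aD) natrD natr_sum mulrDl.
  rewrite big_split /=; congr (_ + _).
  under eq_bigr => i _ do rewrite mulr_suml.
  rewrite exchange_big /=; apply: eq_bigr => b _; apply: eq_bigr => i _.
  by rewrite cc_shift.
have K : \sum_(i < k.+2) ((X v D' i R)%:R * (cc n'.+1 k.+1 i)%:R : 'F_2) =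
    \sum_(i < k.+2) (X v D' i R)%:R * (cc n' k.+1 i)%:R +
    \sum_(i < k.+1) (n' - 2 * i)%:R * (X v D' i R)%:R * (cc n'.-1 k i)%:R.
  rewrite [LHS]big_ord_recr [X in _ = X + _]big_ord_recr /= !cckk addrAC; congr (_ + _).
  rewrite -big_split; apply: eq_bigr => i _; apply: K1; first by rewrite -ltnS ltn_ord.
  by move=> H; rewrite (Xbig v_inj).
rewrite HD' ERHS K -E5 (Xrec v_inj _ nRs aD) natrD natr_sum IH1.
rewrite (eq_bigr G); last by move=> b /andP[bD _]; rewrite IH2.
rewrite [\sum_(b in D') G b](bigID (R a)) /=.
rewrite -!addrA; congr (_ + _).
rewrite /nR addrC -addrA xx2 addr0.
by [].
Qed.
End Main.

Lemma muX (A : seq nat) k (B : pred nat) :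
  mu A k B = X (val : seq_sub A -> nat) setT k (fun x y => B (val x + val y)).
Proof.
rewrite /mu /X /invs; apply: eq_card => s; rewrite !inE involE.
have -> : supp setT s = true by apply/forallP => x; rewrite in_setT.
by [].
Qed.

Lemma countP m : (m <= count Pset (iota 0 (4 * m)))%N.
Proof.
elim: m => // m IH; rewrite mulnS addnC iotaD count_cat add0n.
rewrite -[m.+1]addn1 leq_add //=.
rewrite /Pset; have -> : (4 * m %% 4 = 0)%N by rewrite modnMr.
by [].
Qed.

Lemma uniqP m : uniq (Prestr m).
Proof. by rewrite /Prestr /restr take_uniq // filter_uniq // iota_uniq. Qed.

Lemma sizeP m : size (Prestr m) = m.
Proof.
rewrite /Prestr /restr size_take size_filter.
by case: ltnP (countP m) => // H1 H2; apply/eqP; rewrite eqn_leq H1 H2.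
Qed.

Local Close Scope ring_scope.

Theorem lemma2p4 (m k : nat) : 1 <= m -> 1 <= k ->
  \sum_(0 <= i < k.+1) mu (Prestr m) i Jstar * binomZ m i (2 * k - 2 * i)
  = mu (Prestr m) k Lset %[mod 2].
Proof.
move=> _ _.
set R := fun x y : seq_sub (Prestr m) => Jstar (val x + val y).
have Rs : forall x y, R x y = R y x by move=> x y; rewrite /R addnC.
have vi : injective (val : seq_sub (Prestr m) -> nat) := val_inj.
have cardT : #|[set: seq_sub (Prestr m)]| = m.
  by rewrite cardsT card_seq_sub ?uniqP // sizeP.
suff H : ((\sum_(0 <= i < k.+1) mu (Prestr m) i Jstar * binomZ m i (2 * k - 2 * i))%:R : 'F_2)%R
   = ((mu (Prestr m) k Lset)%:R)%R.
  by move/(congr1 (fun x : 'F_2 => nat_of_ord x)): H; rewrite !val_Fp_nat.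
rewrite muX (mainF2 vi Rs erefl) natr_sum big_mkord cardT.
apply: eq_bigr => i _; rewrite muX natrM -/R.
rewrite /binomZ /cc mulnBr; case: leqP => // H.
by rewrite (Xbig vi) ?cardT // !GRing.mul0r.
Qed.
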